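(* Let $a,b,k,n$ be positive integers with $k=a+b\ge2$ and $n\ge\max\{a,b\}$. Then $$\left(1+\frac an\right)^b\left(1-\frac bn\right)^a\ge1-\frac{\max\{ab^2,ba^2\}}{n^2}\ge1-\frac{(4/27)k^3}{n^2}.$$ *)

(* Defs.v *)
From Stdlib Require Import Reals.

(* Main.v *)
Require Import Defs.
From Stdlib Require Import Reals Arith.
From Stdlib Require Import Lra Lia.
Open Scope R_scope.

Lemma bern (h : R) (n : nat) : -1 <= h -> 1 + INR n * h <= (1 + h) ^ n.
Proof.
  intro Hh. induction n as [|n IH].
  - simpl. lra.
  - rewrite S_INR. simpl.
    assert (0 <= (1+h)^n) by (apply pow_le; lra).
    assert (0 <= INR n) by apply pos_INR.
    assert (0 <= INR n * (h*h)) by (apply Rmult_le_pos; nra).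
    nra.
Qed.

Lemma step (p : nat) (c : R) : (1 <= p)%nat -> c <= INR p ->
  (1 - c / INR p) ^ p <= (1 - c / INR (S p)) ^ (S p).
Proof.
  intros Hp Hc. rewrite S_INR.
  set (P := INR p) in *.
  assert (HP : 1 <= P) by (apply (le_INR 1 p) in Hp; simpl in Hp; exact Hp).
  destruct (Req_dec c P) as [E|E].
  - subst c. replace (1 - P / P) with 0 by (field; lra).
    rewrite pow_i by lia. apply pow_le.
    replace (1 - P / (P+1)) with (/(P+1)) by (field; lra).
    apply Rlt_le, Rinv_0_lt_compat; lra.
  - assert (Hc' : c < P) by lra.
    set (q := 1 - c / P).
    assert (Hq : 0 < q).
    { unfold q. replace (1 - c/P) with ((P - c) / P) by (field; lra).
      unfold Rdiv. apply Rmult_lt_0_compat; [lra| apply Rinv_0_lt_compat; lra]. }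
    set (h := c / ((P+1) * (P - c))).
    assert (Hr : 1 - c / (P+1) = q * (1 + h)) by (unfold q, h; field; lra).
    assert (H1h : 0 < 1 + h).
    { replace (1 + h) with ((1 - c/(P+1)) / q) by (rewrite Hr; field; lra).
      replace (1 - c/(P+1)) with ((P + 1 - c) / (P+1)) by (field; lra).
      unfold Rdiv. apply Rmult_lt_0_compat; [apply Rmult_lt_0_compat|];
        apply Rinv_0_lt_compat in Hq; try lra.
      apply Rinv_0_lt_compat; lra. }
    rewrite Hr, Rpow_mult_distr.
    assert (B := bern h (S p) (ltac:(lra))). rewrite S_INR in B. fold P in B.
    assert (Hqp : 0 <= q ^ p) by (apply pow_le; lra).
    assert (E1 : q ^ p = q ^ (S p) * (1 + (P + 1) * h)).
    { simpl. unfold h, q. field. lra. }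
    rewrite E1. apply Rmult_le_compat_l; [apply pow_le; lra | exact B].
Qed.

Lemma mono (b d : nat) (c : R) : (1 <= b)%nat -> c <= INR b ->
  (1 - c / INR b) ^ b <= (1 - c / INR (b + d)) ^ (b + d).
Proof.
  intros Hb Hc. induction d as [|d IH].
  - rewrite Nat.add_0_r. lra.
  - eapply Rle_trans; [exact IH|].
    replace (b + S d)%nat with (S (b + d)) by lia.
    apply step; [lia|]. eapply Rle_trans; [exact Hc|]. apply le_INR; lia.
Qed.


Theorem lemma5p5 (a b k n : nat)
  (ha : (0 < a)%nat) (hb : (0 < b)%nat) (hk0 : (0 < k)%nat) (hn0 : (0 < n)%nat)
  (hk : k = (a + b)%nat) (hk2 : (2 <= k)%nat) (hn : (Nat.max a b <= n)%nat) :
  (1 + INR a / INR n) ^ b * (1 - INR b / INR n) ^ a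
    >= 1 - Rmax (INR a * INR b ^ 2) (INR b * INR a ^ 2) / INR n ^ 2
  /\ 1 - Rmax (INR a * INR b ^ 2) (INR b * INR a ^ 2) / INR n ^ 2
    >= 1 - (4 / 27) * INR k ^ 3 / INR n ^ 2.
Proof.
  assert (Ha : 1 <= INR a) by (apply (le_INR 1 a); lia).
  assert (Hb : 1 <= INR b) by (apply (le_INR 1 b); lia).
  assert (Han : INR a <= INR n) by (apply le_INR; lia).
  assert (Hbn : INR b <= INR n) by (apply le_INR; lia).
  assert (Hn2 : 0 < INR n ^ 2) by (apply pow_lt; lra).
  set (M := Rmax (INR a * INR b ^ 2) (INR b * INR a ^ 2)).
  split.
  - apply Rle_ge.
    destruct (le_ge_dec b a) as [Hab|Hab].
    + assert (Hm := mono b (a - b) (INR a * INR b / INR n) ltac:(lia)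
        ltac:(apply Rmult_le_reg_r with (INR n); [lra|];
              unfold Rdiv; rewrite Rmult_assoc, Rinv_l, Rmult_1_r by lra; nra)).
      replace (b + (a - b))%nat with a in Hm by lia.
      replace (1 - INR a * INR b / INR n / INR b) with (1 - INR a / INR n) in Hm
        by (field; lra).
      replace (1 - INR a * INR b / INR n / INR a) with (1 - INR b / INR n) in Hm
        by (field; lra).
      assert (Hx : INR a / INR n <= 1)
        by (apply Rmult_le_reg_r with (INR n); [lra|];
            unfold Rdiv; rewrite Rmult_assoc, Rinv_l, Rmult_1_r by lra; lra).
      assert (Hx0 : 0 <= INR a / INR n)
        by (unfold Rdiv; apply Rmult_le_pos; [lra| apply Rlt_le, Rinv_0_lt_compat; lra]).
      eapply Rle_trans; [|apply Rmult_le_compat_l; [apply pow_le; lra| exact Hm]].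
      rewrite <- Rpow_mult_distr.
      replace ((1 + INR a / INR n) * (1 - INR a / INR n)) with (1 + - (INR a / INR n) ^ 2) by ring.
      eapply Rle_trans; [|apply (bern (- (INR a / INR n)^2)); nra].
      assert (HM : INR b * INR a ^ 2 <= M) by apply Rmax_r.
      replace (1 + INR b * - (INR a / INR n) ^ 2) with (1 - INR b * INR a ^ 2 / INR n ^ 2)
        by (field; lra).
      unfold Rdiv. apply Rplus_le_compat_l, Ropp_le_contravar, Rmult_le_compat_r;
        [apply Rlt_le, Rinv_0_lt_compat; lra| exact HM].
    + assert (Hm := mono a (b - a) (- (INR a * INR b / INR n)) ltac:(lia)
        ltac:(assert (0 <= INR a * INR b / INR n) by
               (unfold Rdiv; apply Rmult_le_pos; [nra| apply Rlt_le, Rinv_0_lt_compat; lra]); lra)).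
      replace (a + (b - a))%nat with b in Hm by lia.
      replace (1 - - (INR a * INR b / INR n) / INR a) with (1 + INR b / INR n) in Hm
        by (field; lra).
      replace (1 - - (INR a * INR b / INR n) / INR b) with (1 + INR a / INR n) in Hm
        by (field; lra).
      assert (Hx : INR b / INR n <= 1)
        by (apply Rmult_le_reg_r with (INR n); [lra|];
            unfold Rdiv; rewrite Rmult_assoc, Rinv_l, Rmult_1_r by lra; lra).
      assert (Hx0 : 0 <= INR b / INR n)
        by (unfold Rdiv; apply Rmult_le_pos; [lra| apply Rlt_le, Rinv_0_lt_compat; lra]).
      eapply Rle_trans; [|apply Rmult_le_compat_r; [apply pow_le; lra| exact Hm]].
      rewrite <- Rpow_mult_distr.
      replace ((1 + INR b / INR n) * (1 - INR b / INR n)) with (1 + - (INR b / INR n) ^ 2) by ring.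
      eapply Rle_trans; [|apply (bern (- (INR b / INR n)^2)); nra].
      assert (HM : INR a * INR b ^ 2 <= M) by apply Rmax_l.
      replace (1 + INR a * - (INR b / INR n) ^ 2) with (1 - INR a * INR b ^ 2 / INR n ^ 2)
        by (field; lra).
      unfold Rdiv. apply Rplus_le_compat_l, Ropp_le_contravar, Rmult_le_compat_r;
        [apply Rlt_le, Rinv_0_lt_compat; lra| exact HM].
  - apply Rle_ge. subst k. rewrite plus_INR.
    assert (HM : M <= 4 / 27 * (INR a + INR b) ^ 3).
    { unfold M. apply Rmax_lub.
      - assert (0 <= (INR b - 2 * INR a)^2 * (4 * INR b + INR a)) by
          (apply Rmult_le_pos; [apply pow2_ge_0| lra]). nra.
      - assert (0 <= (INR a - 2 * INR b)^2 * (4 * INR a + INR b)) by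
          (apply Rmult_le_pos; [apply pow2_ge_0| lra]). nra. }
    unfold Rdiv. apply Rplus_le_compat_l, Ropp_le_contravar, Rmult_le_compat_r;
        [apply Rlt_le, Rinv_0_lt_compat; lra| exact HM].
Qed.
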